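(* Let $0<L<M$, $\mathcal{M}=\left]L,M\right[$, and let $\mu$ be a non-atomic finite Borel measure on $[L,M]$ with total mass $\mu([L,M])=M-L$. Then there exists a constant $C_0>0$ such that for every $u\in\mathcal{D}(\mathcal{M})$, $$\|u\|_{L^2_\mu(\mathcal{M})}\le C_0\,\Big\|x\,\frac{\partial u}{\partial x}\Big\|_{L^2(\mathcal{M})}.$$
   Context: $\mathcal{D}(\mathcal{M})$ is the space of smooth functions with compact support in $\mathcal{M}$; $\|u\|_{L^2_\mu(\mathcal{M})}=(\int_L^M u^2\,d\mu)^{1/2}$ and $\|\cdot\|_{L^2(\mathcal{M})}$ is the $L^2$ norm for Lebesgue measure on $\mathcal{M}$. *)

(* Defs.v *)
From mathcomp Require Import all_boot all_order all_algebra.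
From mathcomp Require Import all_classical all_reals all_analysis.
Set Implicit Arguments. Unset Strict Implicit. Unset Printing Implicit Defensive.
Import Order.TTheory GRing.Theory Num.Theory.
Import numFieldNormedType.Exports.
Local Open Scope classical_set_scope.
Local Open Scope ring_scope.

Definition is_atom (R : realType) (mu : {measure set R -> \bar R}) (A : set R) :=
  [/\ measurable A, (0 < mu A)%E &
     forall B, measurable B -> B `<=` A -> mu B = 0%E \/ mu (A `\` B) = 0%E].

Definition non_atomic (R : realType) (mu : {measure set R -> \bar R}) :=
  forall A, ~ is_atom mu A.

Definition smooth (R : realType) (u : R -> R) :=
  forall (n : nat) (x : R), derivable (derive1n n u) x 1.

(* u belongs to D(]L,M[) : smooth, with compact support contained in ]L,M[
   (u is identified with its extension by zero to R). *)
Definition test_function (R : realType) (L M : R) (u : R -> R) :=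
  [/\ smooth u,
      compact (closure [set x | u x != 0]) &
      closure [set x | u x != 0] `<=` `]L, M[ ].

Definition L2mu_norm (R : realType) (mu : {measure set R -> \bar R}) (L M : R)
    (u : R -> R) : \bar R :=
  poweR (\int[mu]_(x in `]L, M[) ((u x) ^+ 2)%:E)%E (2^-1).

Definition L2_norm (R : realType) (L M : R) (f : R -> R) : \bar R :=
  poweR (\int[lebesgue_measure]_(x in `]L, M[) ((f x) ^+ 2)%:E)%E (2^-1).

(* Main.v *)
Require Import Defs.
From mathcomp Require Import all_boot all_order all_algebra.
From mathcomp Require Import all_classical all_reals all_analysis.
From mathcomp Require Import ring lra measurable_realfun.
Import Order.TTheory GRing.Theory Num.Theory.
Import numFieldNormedType.Exports.
Local Open Scope classical_set_scope.
Local Open Scope ring_scope.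

Lemma cont_mfun (R : realType) (h : R -> R) (D : set R) :
  continuous h -> measurable D -> measurable_fun D h.
Proof.
move=> ch mD.
exact: (measurable_funS measurableT (@subsetT _ D) (continuous_measurable_fun ch)).
Qed.

Lemma cont_norm_mfun (R : realType) (h : R -> R) (D : set R) :
  continuous h -> measurable D -> measurable_fun D (fun t => `|h t|).
Proof.
move=> ch mD.
apply: cont_mfun => // t.
exact: (continuous_comp (ch t) (@norm_continuous _ _ (h t))).
Qed.

Lemma pt_bound (R : realType) (L t y e : R) : 0 < L -> L <= t -> 0 < e ->
  `|y| <= (2 * L * e)^-1 + e / (2 * L) * (t * y) ^+ 2.
Proof.
move=> L0 Lt e0.
have t0 : 0 < t by apply: lt_le_trans L0 Lt.
set z := `|t * y|.
have z0 : 0 <= z by apply: normr_ge0.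
have zy : L * `|y| <= z by rewrite /z normrM (gtr0_norm t0) ler_wpM2r.
have -> : (t * y) ^+ 2 = z ^+ 2 by rewrite /z real_normK ?num_real.
have h1 : 2 * z * e <= 1 + (e * z) ^+ 2.
  have := sqr_ge0 (e * z - 1); rewrite sqrrB; lra.
have -> : (2 * L * e)^-1 + e / (2 * L) * z ^+ 2 = (1 + (e * z) ^+ 2) / (2 * L * e).
  by field; rewrite ?gt_eqF.
rewrite ler_pdivlMr ?mulr_gt0 //.
nra.
Qed.
Lemma amgm_bound (R : realType) (U A B : R) : 0 <= A -> 0 <= B ->
  (forall e, 0 < e -> `|U| <= A / e + e * B) -> U ^+ 2 <= 4 * A * B.
Proof.
move=> A0 B0 H.
rewrite -real_normK ?num_real //.
move: (normr_ge0 U) H; move: (`|U|) => V V0 {}H.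
rewrite leNgt; apply/negP => HV.
have Vp : 0 < V.
  rewrite lt0r V0 andbT; apply/negP => /eqP V00.
  by move: HV; rewrite V00; nra.
have [B00|Bp] : B = 0 \/ 0 < B.
  by move: B0; rewrite le_eqVlt => /orP[/eqP ->|->]; [left|right].
- have [A00|Ap] : A = 0 \/ 0 < A.
    by move: A0; rewrite le_eqVlt => /orP[/eqP ->|->]; [left|right].
  + have := H 1 ltr01; rewrite A00 B00 mul0r mulr0 addr0 => h; lra.
  + have e0 : 0 < 4 * A / V by rewrite divr_gt0 // mulr_gt0.
    have := H _ e0; rewrite B00 mulr0 addr0.
    have -> : A / (4 * A / V) = V / 4 by field; rewrite ?gt_eqF.
    lra.
- have e0 : 0 < V / (2 * B) by rewrite divr_gt0 // mulr_gt0.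
  have := H _ e0.
  have -> : A / (V / (2 * B)) = 2 * A * B / V.
    by field; rewrite ?gt_eqF.
  have -> : V / (2 * B) * B = V / 2 by field; rewrite gt_eqF.
  move=> H2.
  have := ler_wpM2r (ltW Vp) H2.
  rewrite mulrDl divfK ?gt_eqF //.
  move: HV; rewrite expr2; nra.
Qed.

Theorem mainTheorem5 (R : realType) (L M : R) (mu : {measure set R -> \bar R}) :
  0 < L -> L < M ->
  mu (~` `[L, M]%classic) = 0%E ->
  mu `[L, M]%classic = (M - L)%:E ->
  non_atomic mu ->
  exists C0 : R, 0 < C0 /\
    forall u : R -> R, test_function L M u ->
      (L2mu_norm mu L M u <= C0%:E * L2_norm L M (fun x => x * derive1 u x)%R)%E.
Proof.
move=> L0 LM _ muLM _.
have C00 : 0 < (M - L) / L by rewrite divr_gt0 // subr_gt0.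
exists ((M - L) / L); split => // u [su csupp supp].
set f := derive1 u.
have du : forall x, derivable u x 1 by exact: (su 0%N).
have df : forall x, derivable f x 1 by exact: (su 1%N).
have cu : continuous u.
  by move=> x; apply/differentiable_continuous; rewrite -derivable1_diffP.
have cf : continuous f.
  by move=> x; apply/differentiable_continuous; rewrite -derivable1_diffP.
have uL : u L = 0.
  have [//|uL0] := eqVneq (u L) 0.
  have := supp L (@subset_closure _ [set x | u x != 0] L uL0).
  by rewrite /= in_itv /= ltxx.
set g := fun t => (t * f t) ^+ 2.
have mg : forall D, measurable D -> measurable_fun D g.
  move=> D mD; apply: measurable_funX; apply: measurable_funM.
    exact: measurable_id.
  exact: cont_mfun.
rewrite /L2mu_norm /L2_norm /=.
have K0 : (0 <= \int[lebesgue_measure]_(x in `]L, M[) ((x * f x) ^+ 2)%:E)%E.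
  by apply: integral_ge0 => x _; rewrite lee_fin sqr_ge0.
move: K0.
move Ke : (\int[lebesgue_measure]_(x in `]L, M[) ((x * f x) ^+ 2)%:E)%E => K.
case: K Ke => [k Ke k0| _ _|//]; last first.
  by rewrite poweRyr ?gt0_muley ?leey // invr_eq0 pnatr_eq0.
rewrite lee_fin in k0.
have key : forall x, L < x -> x < M -> forall e, 0 < e ->
    `|u x| <= (M - L) / (2 * L) / e + e * (k / (2 * L)).
  move=> x Lx xM e e0.
  set a := (2 * L * e)^-1.
  set b := e / (2 * L).
  have a0 : 0 < a by rewrite invr_gt0 !mulr_gt0.
  have b0 : 0 < b by rewrite divr_gt0 // mulr_gt0.
  have mab : forall D, measurable D -> measurable_fun D (fun t => a + b * g t).
    move=> D mD; apply: measurable_funD; first exact: measurable_cst.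
    by apply: measurable_funM; [exact: measurable_cst | exact: mg].
  have ab0 : forall t, 0 <= a + b * g t.
    move=> t; apply: addr_ge0; first exact: ltW.
    apply: mulr_ge0; [exact: ltW | exact: sqr_ge0].
  have FTC : (\int[lebesgue_measure]_(t in `[L, x]) (f t)%:E = (u x)%:E)%E.
    apply: etrans; first apply: (@continuous_FTC2 _ f u L x Lx).
    - exact: continuous_subspaceT.
    - split.
      + by move=> t _; exact: du.
      + exact: cvg_at_right_filter (cu L).
      + exact: cvg_at_left_filter (cu x).
    - by [].
    - by rewrite uL sube0.
  rewrite -lee_fin -abse_EFin -FTC.
  eapply le_trans.
    apply: le_abse_integral => //.
    by apply/measurable_EFinP; exact: cont_mfun.
  apply: (@le_trans _ _ (\int[lebesgue_measure]_(t in `[L, x]) (a + b * g t)%:E)%E).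
    under eq_integral => t _ do rewrite abse_EFin.
    apply: ge0_le_integral => //.
    - by apply/measurable_EFinP; exact: cont_norm_mfun.
    - by apply/measurable_EFinP; exact: mab.
    - move=> t; rewrite /= in_itv /= => /andP[Lt _]; rewrite lee_fin.
      exact: pt_bound.
  apply: (@le_trans _ _ (\int[lebesgue_measure]_(t in `]L, M[) (a + b * g t)%:E)%E).
    rewrite -(@integral_itv_bndoo _ L M _ true false); last first.
      by apply/measurable_EFinP; exact: mab.
    apply: ge0_subset_integral => //.
    - by apply/measurable_EFinP; exact: mab.
    - by move=> t _; rewrite lee_fin.
    - move=> t; rewrite /= !in_itv /= => /andP[-> tx] /=.
      exact: le_trans tx (ltW xM).
  under eq_integral => t _ do rewrite EFinD EFinM.
  rewrite ge0_integralD //; last 3 first. all: try (by move=> t _; rewrite lee_fin ltW).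
  all: try (by move=> t _; rewrite lee_fin mulr_ge0 ?sqr_ge0 // ltW).
  all: try (by apply/measurable_EFinP; apply: measurable_funM; [exact: measurable_cst | exact: mg]).

  rewrite integral_cst // ge0_integralZl //; last 3 first.
  - by apply/measurable_EFinP; exact: mg.
  - by move=> t _; rewrite lee_fin sqr_ge0.
  - by rewrite lee_fin ltW.
  have hm : (lebesgue_measure (`]L, M[%classic : set R) = (M - L)%:E)%E.
    by rewrite lebesgue_measure_itv /= lte_fin LM -EFinB.
  rewrite /g Ke.
  set mLM := (X in (a%:E * X + _)%E).
  have -> : mLM = (M - L)%:E by exact: hm.
  rewrite -!EFinM -EFinD lee_fin.
  rewrite le_eqVlt; apply/orP; left; apply/eqP.
  by rewrite /a /b; field; rewrite ?gt_eqF.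
set c := 4 * ((M - L) / (2 * L)) * (k / (2 * L)).
have c0 : 0 <= c.
  by rewrite /c !mulr_ge0 // ?invr_ge0 ?mulr_ge0 ?subr_ge0 // ltW.
have key2 : forall x, L < x -> x < M -> u x ^+ 2 <= c.
  move=> x Lx xM; apply: amgm_bound.
  - by rewrite divr_ge0 ?mulr_ge0 ?subr_ge0 // ltW.
  - by rewrite divr_ge0 ?mulr_ge0 // ltW.
  - exact: key.
have Smu : (\int[mu]_(x in `]L, M[) (u x ^+ 2)%:E <= (c * (M - L))%:E)%E.
  apply: (@le_trans _ _ (\int[mu]_(x in `]L, M[) c%:E)%E).
    apply: ge0_le_integral => //.
    all: try (by move=> t _; rewrite lee_fin sqr_ge0).
    all: try (by apply/measurable_EFinP; apply: measurable_funX; exact: cont_mfun).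
    move=> t; rewrite /= in_itv /= => /andP[Lt tM]; rewrite lee_fin.
    exact: key2.
  rewrite integral_cst // (EFinM c); apply: lee_pmul => //.
  rewrite -muLM; apply: le_measure; rewrite ?inE //.
  move=> t; rewrite /= !in_itv /= => /andP[Lt tM].
  by rewrite !ltW.
have S0 : (0 <= \int[mu]_(x in `]L, M[) (u x ^+ 2)%:E)%E.
  by apply: integral_ge0 => x _; rewrite lee_fin sqr_ge0.
move: S0 Smu.
move Se : (\int[mu]_(x in `]L, M[) (u x ^+ 2)%:E)%E => S.
case: S Se => [s _ s0 Ss|_ _ Ss|//]; last first.
  by [].
rewrite !poweR_EFin -EFinM lee_fin.
rewrite lee_fin in s0; rewrite lee_fin in Ss.
rewrite !powR12_sqrt //.
apply: le_trans (ler_wsqrtr Ss) _.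
have -> : c * (M - L) = ((M - L) / L) ^+ 2 * k.
  by rewrite /c; field; rewrite gt_eqF.
by rewrite sqrtrM ?sqr_ge0 // sqrtr_sqr ger0_norm // ltW.
Qed.
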